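(* Let $k\ge4$ and $x\in(1/4,1/2)$. In the one-shot $k$-candidate positioning game with uniform voters on $[0,1]$, left–right tie-breaking, and each candidate's payoff equal to its probability of being the plurality winner, the mixed strategy in which each candidate independently chooses $x$ or $1-x$ with probability $1/2$ each is a symmetric mixed-strategy Nash equilibrium: if all other $k-1$ candidates use this strategy, no (possibly mixed) strategy of the remaining candidate yields a higher win probability.
   Context: Voters form a continuum uniformly distributed on $[0,1]$, each voting for the nearest occupied point. The vote share allocated to an occupied point is the measure of voters whose nearest occupied point it is; it splits into a left part (voters to its left) and a right part (voters to its right). Left–right tie-breaking: if several candidates occupy the same point, one of them chosen uniformly at random receives the entire left part of that point's vote share and a different one chosen uniformly at random receives the entire right part; the others receive nothing. (A single candidate at a point receives both parts.) The plurality winner is the candidate with the largest vote share, ties broken uniformly at random. Each of the $k$ candidates chooses a position in $[0,1]$ (possibly at random). *)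

(* Defs.v *)
From mathcomp Require Import all_boot all_order all_algebra.
From mathcomp Require Import all_classical all_reals all_analysis.
Set Implicit Arguments. Unset Strict Implicit. Unset Printing Implicit Defensive.
Import Order.TTheory GRing.Theory Num.Theory.
Local Open Scope ring_scope.

Section Game.
Variables (R : realType) (k : nat).

(* Left part of the vote share of the occupied point y (y in [0,1]):
   measure of voters in [0,y] whose nearest occupied point is y, i.e.
   min(y, (y - prev)/2) where prev ranges over occupied points left of y
   (= y if there is none). *)
Definition left_part (p : 'I_k -> R) (y : R) : R :=
  \big[Num.min/y]_(j | p j < y) ((y - p j) / 2).

(* Right part: measure of voters in [y,1] whose nearest occupied point is y. *)
Definition right_part (p : 'I_k -> R) (y : R) : R :=
  \big[Num.min/(1 - y)]_(j | y < p j) ((p j - y) / 2).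

(* A tie-breaking outcome: lr.1 i (resp. lr.2 i) is the candidate receiving the
   left (resp. right) part of the point p i.  Uniform choice among valid outcomes is
   exactly: independently for each point, a uniformly random ordered pair of
   distinct candidates there. *)
Definition valid_tb (p : 'I_k -> R)
    (lr : {ffun 'I_k -> 'I_k} * {ffun 'I_k -> 'I_k}) : bool :=
  [forall i : 'I_k,
     [&& p (lr.1 i) == p i, p (lr.2 i) == p i,
         (1 < #|[set j | p j == p i]|)%N ==> (lr.1 i != lr.2 i) &
         [forall j : 'I_k, (p j == p i) ==> ((lr.1 j == lr.1 i) && (lr.2 j == lr.2 i))]]].

Definition share (p : 'I_k -> R) (lr : {ffun 'I_k -> 'I_k} * {ffun 'I_k -> 'I_k})
    (j : 'I_k) : R :=
  (if lr.1 j == j then left_part p (p j) else 0) +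
  (if lr.2 j == j then right_part p (p j) else 0).

Definition is_top (p : 'I_k -> R) lr (j : 'I_k) : bool :=
  [forall l : 'I_k, share p lr l <= share p lr j].

Definition win_prob (p : 'I_k -> R) (i : 'I_k) : R :=
  (#|[set lr | valid_tb p lr]|%:R)^-1 *
  \sum_(lr | valid_tb p lr)
     (if is_top p lr i then (#|[set j | is_top p lr j]|%:R)^-1 else 0).

Definition profile (x : R) (i : 'I_k) (c : {ffun 'I_k -> bool}) (y : R) : 'I_k -> R :=
  fun j => if j == i then y else if c j then x else 1 - x.

Definition dev_payoff (x : R) (i : 'I_k) (y : R) : R :=
  ((2 ^ k.-1)%:R)^-1 * \sum_(c : {ffun 'I_k -> bool} | c i == false)
     win_prob (profile x i c y) i.

End Game.

(* Main.v *)
Require Import Defs.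
From mathcomp Require Import all_boot all_order all_algebra.
From mathcomp Require Import all_classical all_reals all_analysis.
From mathcomp Require Import ring lra zify.
Import Order.TTheory GRing.Theory Num.Theory.
Set Implicit Arguments. Unset Strict Implicit. Unset Printing Implicit Defensive.
Local Open Scope ring_scope.

Section Comb.
Variables (R : realType) (k : nat).
Notation LR := ({ffun 'I_k -> 'I_k} * {ffun 'I_k -> 'I_k})%type.

Lemma top_exists (p : 'I_k -> R) lr (k0 : 'I_k) : exists j, is_top p lr j.
Proof.
case: (@arg_maxP _ _ _ k0 predT (share p lr)) => // j _ Hj.
by exists j; apply/forallP => l; apply: Hj.
Qed.

Lemma card_top_gt0 (p : 'I_k -> R) lr i : is_top p lr i ->
  (0 < #|[set j | is_top p lr j]|)%N.
Proof. by move=> Hi; apply/card_gt0P; exists i; rewrite inE. Qed.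

Lemma win_prob_ge0 (p : 'I_k -> R) i : 0 <= win_prob p i.
Proof.
rewrite /win_prob mulr_ge0 // ?invr_ge0 // sumr_ge0 // => lr _.
by case: ifP => // _; rewrite invr_ge0.
Qed.

Lemma win_prob_le1 (p : 'I_k -> R) i : win_prob p i <= 1.
Proof.
rewrite /win_prob.
have -> : #|[set lr | valid_tb p lr]| = #|[pred lr | valid_tb p lr]|.
  by apply: eq_card => lr; rewrite inE.
have H : \sum_(lr | valid_tb p lr)
     (if is_top p lr i then (#|[set j | is_top p lr j]|%:R)^-1 else 0)
   <= \sum_(lr | valid_tb p lr) (1 : R).
  apply: ler_sum => lr _; case: ifP => // Ht.
  have Hc := card_top_gt0 Ht.
  rewrite invf_le1; first by move: Hc; rewrite -(ler1n R).
  by move: Hc; rewrite -(ltr0n R).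
rewrite sumr_const in H.
case: (posnP #|[pred lr | valid_tb p lr]|) => [->|Hn]; first by rewrite invr0 mul0r.
apply: (le_trans (ler_wpM2l _ H)); first by rewrite invr_ge0.
by rewrite -mulr_natl mulr1 mulVf // pnatr_eq0 -lt0n.
Qed.

Lemma win_prob0 (p : 'I_k -> R) i :
  (forall lr, valid_tb p lr -> ~~ is_top p lr i) -> win_prob p i = 0.
Proof.
move=> H; rewrite /win_prob big1 ?mulr0 // => lr /H.
by move/negbTE ->.
Qed.

Lemma sum_win (p : 'I_k -> R) (k0 : 'I_k) : (exists lr, valid_tb p lr) ->
  \sum_i win_prob p i = 1.
Proof.
move=> [lr0 Hlr0].
rewrite /win_prob -mulr_sumr exchange_big /=.
have -> : \sum_(lr | valid_tb p lr) \sum_i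
     (if is_top p lr i then (#|[set j | is_top p lr j]|%:R)^-1 else (0:R))
   = \sum_(lr | valid_tb p lr) (1 : R).
  apply: eq_bigr => lr _; rewrite -big_mkcond /= sumr_const.
  have [j Hj] := top_exists p lr k0.
  have Hc := card_top_gt0 Hj.
  have -> : #|[pred i | is_top p lr i]| = #|[set j | is_top p lr j]|.
    by apply: eq_card => m; rewrite inE.
  rewrite -(mulr_natl (_^-1)) mulfV //.
  by move: Hc; rewrite -(ltr0n R) lt0r => /andP[].
rewrite sumr_const.
have -> : #|[set lr | valid_tb p lr]| = #|[pred lr | valid_tb p lr]|.
  by apply: eq_card => lr; rewrite inE.
rewrite -(mulr_natr 1) mul1r mulVf //.
have : (0 < #|[pred lr | valid_tb p lr]|)%N by apply/card_gt0P; exists lr0.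
by rewrite -(ltr0n R) lt0r => /andP[].
Qed.


Lemma card_relabel (T : finType) (f g : T -> T) (A B : pred T) :
  cancel f g -> cancel g f -> (forall x, B (f x) = A x) ->
  #|[set x | B x]| = #|[set x | A x]|.
Proof.
move=> fK gK BA.
rewrite -(card_imset [set x | A x] (can_inj fK)); apply: eq_card => y.
by rewrite -{1 2}(gK y) mem_imset ?inE ?BA //; exact: can_inj fK.
Qed.

Lemma win_prob_relabel (p q : 'I_k -> R) (s s' : 'I_k -> 'I_k) (F F' : LR -> LR) :
  cancel s s' -> cancel s' s -> cancel F F' -> cancel F' F ->
  (forall lr, valid_tb q (F lr) = valid_tb p lr) ->
  (forall lr j, valid_tb p lr -> share q (F lr) (s j) = share p lr j) ->
  forall i, win_prob q (s i) = win_prob p i.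
Proof.
move=> sK s'K FK F'K HV HS i.
have topE lr j : valid_tb p lr -> is_top q (F lr) (s j) = is_top p lr j.
  move=> V; apply/forallP/forallP => H l.
    by have := H (s l); rewrite !HS.
  by rewrite -(s'K l) !HS //; exact: H.
have cardT lr : valid_tb p lr ->
    #|[set j | is_top q (F lr) j]| = #|[set j | is_top p lr j]|.
  by move=> V; apply: (card_relabel sK s'K) => j; rewrite topE.
rewrite /win_prob (card_relabel FK F'K (A := fun lr => valid_tb p lr)) //.
congr (_ * _).
rewrite (reindex_inj (can_inj FK)) /=.
under eq_bigl do rewrite HV.
by apply: eq_bigr => lr V; rewrite topE // cardT.
Qed.


Definition validE (E : 'I_k -> 'I_k -> bool) (lr : LR) : bool :=
  [forall i : 'I_k,
     [&& E (lr.1 i) i, E (lr.2 i) i,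
         (1 < #|[set j | E j i]|)%N ==> (lr.1 i != lr.2 i) &
         [forall j : 'I_k, E j i ==> ((lr.1 j == lr.1 i) && (lr.2 j == lr.2 i))]]].

Lemma validE_p (p : 'I_k -> R) lr : valid_tb p lr = validE (fun a b => p a == p b) lr.
Proof. by []. Qed.

Lemma validE_swap E lr : validE E (lr.2, lr.1) = validE E lr.
Proof.
rewrite /validE /=; apply: eq_forallb => i.
apply/and4P/and4P => -[a b c d]; split => //; try by rewrite eq_sym.
- by apply/forallP => j; move/forallP: d => /(_ j); rewrite andbC.
- by apply/forallP => j; move/forallP: d => /(_ j); rewrite andbC.
Qed.

Lemma left_refl (p : 'I_k -> R) y :
  left_part (fun j => 1 - p j) (1 - y) = right_part p y.
Proof.
rewrite /left_part /right_part; apply: eq_big => [j|j _].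
  by rewrite ltrD2l ltrN2.
by congr (_ / _); ring.
Qed.

Lemma right_refl (p : 'I_k -> R) y :
  right_part (fun j => 1 - p j) (1 - y) = left_part p y.
Proof.
rewrite /left_part /right_part.
have -> : 1 - (1 - y) = y by ring.
apply: eq_big => [j|j _].
  by rewrite ltrD2l ltrN2.
by congr (_ / _); ring.
Qed.

Lemma win_refl (p : 'I_k -> R) i : win_prob (fun j => 1 - p j) i = win_prob p i.
Proof.
apply: (@win_prob_relabel p (fun j => 1 - p j) id id
   (fun lr => (lr.2, lr.1)) (fun lr => (lr.2, lr.1))) => //.
- by move=> lr /=; rewrite -surjective_pairing.
- by move=> lr /=; rewrite -surjective_pairing.
- move=> lr; rewrite !validE_p -[RHS]validE_swap; congr validE.
  by apply: funext => a; apply: funext => b; rewrite (inj_eq (addrI 1)) (inj_eq oppr_inj).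
- by move=> lr j _; rewrite /share /= left_refl right_refl addrC.
Qed.

Lemma forall_reindex (s s' : 'I_k -> 'I_k) (P : pred 'I_k) :
  cancel s s' -> cancel s' s -> [forall i, P i] = [forall i, P (s i)].
Proof.
move=> sK s'K; apply/forallP/forallP => H i; first exact: H.
by rewrite -(s'K i); exact: H.
Qed.

Lemma win_perm (p : 'I_k -> R) (s s' : 'I_k -> 'I_k) i :
  cancel s s' -> cancel s' s -> win_prob (fun j => p (s' j)) (s i) = win_prob p i.
Proof.
move=> sK s'K.
have si := can_inj sK.
pose F (lr : LR) : LR := ([ffun j => s (lr.1 (s' j))], [ffun j => s (lr.2 (s' j))]).
pose F' (lr : LR) : LR := ([ffun j => s' (lr.1 (s j))], [ffun j => s' (lr.2 (s j))]).
have lpE z : left_part (fun j => p (s' j)) z = left_part p z.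
  by rewrite /left_part (reindex_inj si) /=; apply: eq_big => [j|j _]; rewrite sK.
have rpE z : right_part (fun j => p (s' j)) z = right_part p z.
  by rewrite /right_part (reindex_inj si) /=; apply: eq_big => [j|j _]; rewrite sK.
apply: (@win_prob_relabel p (fun j => p (s' j)) s s' F F') => //.
- by move=> lr; rewrite /F /F' /= [RHS]surjective_pairing; congr pair; apply/ffunP => j; rewrite !ffunE ?sK ?s'K.
- by move=> lr; rewrite /F /F' /= [RHS]surjective_pairing; congr pair; apply/ffunP => j; rewrite !ffunE ?sK ?s'K.
- move=> lr; rewrite /valid_tb (forall_reindex _ sK s'K).
  apply: eq_forallb => i0; rewrite /F /= !ffunE !sK (inj_eq si).
  have -> : #|[set j | p (s' j) == p i0]| = #|[set j | p j == p i0]|.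
    by apply: (card_relabel sK s'K) => j; rewrite sK.
  congr [&& _, _, _ & _].
  rewrite (forall_reindex _ sK s'K); apply: eq_forallb => j.
  by rewrite !ffunE !sK !(inj_eq si).
- move=> lr j _; rewrite /share /F /= !ffunE !sK !(inj_eq si) lpE rpE //.
Qed.


Lemma valid_exists (p : 'I_k -> R) : exists lr, valid_tb p lr.
Proof.
exists ([ffun i => [arg min_(m < i | p m == p i) (val m)]],
        [ffun i => [arg max_(m > i | p m == p i) (val m)]]).
apply/forallP => i; rewrite /= !ffunE.
case: (@arg_minnP _ i (fun m => p m == p i) (fun m : 'I_k => val m) (eqxx (p i))) => a Pa Ha.
case: (@arg_maxnP _ i (fun m => p m == p i) (fun m : 'I_k => val m) (eqxx (p i))) => b Pb Hb.
apply/and4P; split => //.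
  apply/implyP => /card_gt1P [x [y [Hx Hy Hxy]]].
  move: Hx Hy; rewrite !inE => Hx Hy.
  apply/negP => /eqP Eab; move/negP: Hxy; apply; apply/eqP/val_inj.
  have := Ha x Hx; have := Ha y Hy; have := Hb x Hx; have := Hb y Hy.
  rewrite Eab /=; lia.
apply/forallP => j; apply/implyP => Hj; rewrite !ffunE.
have Ej m : (p m == p j) = (p m == p i) by rewrite (eqP Hj).
case: (@arg_minnP _ j (fun m => p m == p j) (fun m : 'I_k => val m) (eqxx (p j))) => a' Pa' Ha'.
case: (@arg_maxnP _ j (fun m => p m == p j) (fun m : 'I_k => val m) (eqxx (p j))) => b' Pb' Hb'.
rewrite Ej in Pa'; rewrite Ej in Pb'; rewrite -Ej in Pa; rewrite -Ej in Pb.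
have := Ha a' Pa'; have := Ha' a Pa; have := Hb b' Pb'; have := Hb' b Pb.
move=> /= h1 h2 h3 h4.
apply/andP; split; apply/eqP/val_inj; apply/eqP; rewrite eqn_leq; apply/andP; split => //.
Qed.


Lemma left_ge0 (p : 'I_k -> R) y : 0 <= y -> 0 <= left_part p y.
Proof.
move=> y0; apply: le_bigmin => // j Hj.
by rewrite divr_ge0 // subr_ge0 ltW.
Qed.

Lemma right_ge0 (p : 'I_k -> R) y : y <= 1 -> 0 <= right_part p y.
Proof.
move=> y1; apply: le_bigmin; first by rewrite subr_ge0.
by move=> j Hj; rewrite divr_ge0 // subr_ge0 ltW.
Qed.

Lemma left_le (p : 'I_k -> R) y j : p j < y -> left_part p y <= (y - p j) / 2.
Proof. by move=> Hj; apply: (bigmin_le_cond _ (fun j => (y - p j) / 2)). Qed.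

Lemma left_le_id (p : 'I_k -> R) y : left_part p y <= y.
Proof. exact: bigmin_le_id. Qed.

Lemma right_le (p : 'I_k -> R) y j : y < p j -> right_part p y <= (p j - y) / 2.
Proof. by move=> Hj; apply: (bigmin_le_cond _ (fun j => (p j - y) / 2)). Qed.

Lemma right_le_id (p : 'I_k -> R) y : right_part p y <= 1 - y.
Proof. exact: bigmin_le_id. Qed.

Lemma share_le (p : 'I_k -> R) (lr : LR) j :
  0 <= left_part p (p j) -> 0 <= right_part p (p j) ->
  share p lr j <= left_part p (p j) + right_part p (p j).
Proof. by rewrite /share; case: ifP; case: ifP => _ _ *; lra. Qed.

Lemma share_ge_l (p : 'I_k -> R) (lr : LR) j : lr.1 j = j -> 0 <= right_part p (p j) ->
  left_part p (p j) <= share p lr j.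
Proof. by rewrite /share => ->; rewrite eqxx; case: ifP => _ *; lra. Qed.

Lemma share_ge_r (p : 'I_k -> R) (lr : LR) j : lr.2 j = j -> 0 <= left_part p (p j) ->
  right_part p (p j) <= share p lr j.
Proof. by rewrite /share => ->; rewrite eqxx; case: ifP => _ *; lra. Qed.

Lemma holder1 (p : 'I_k -> R) (lr : LR) j : valid_tb p lr ->
  lr.1 (lr.1 j) = lr.1 j /\ p (lr.1 j) = p j.
Proof.
move=> /forallP /(_ j) /and4P [h1 _ _ /forallP /(_ (lr.1 j))].
by rewrite h1 /= => /andP [/eqP -> _]; split => //; apply/eqP.
Qed.

Lemma holder2 (p : 'I_k -> R) (lr : LR) j : valid_tb p lr ->
  lr.2 (lr.2 j) = lr.2 j /\ p (lr.2 j) = p j.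
Proof.
move=> /forallP /(_ j) /and4P [_ h1 _ /forallP /(_ (lr.2 j))].
by rewrite h1 /= => /andP [_ /eqP ->]; split => //; apply/eqP.
Qed.

Lemma dev_not_top (p : 'I_k -> R) (x y : R) i j1 j2 (lr : LR) :
  1/4 < x -> x < 1/2 -> 0 <= y -> y <= 1 -> y != x -> y != 1 - x ->
  p i = y -> p j1 = x -> p j2 = 1 - x ->
  (forall j, j != i -> p j = x \/ p j = 1 - x) ->
  valid_tb p lr -> ~~ is_top p lr i.
Proof.
move=> x1 x2 y0 y1 yx yx' pi pj1 pj2 Hp V; apply/negP => /forallP Ht.
have Li : 0 <= left_part p (p i) by rewrite pi; exact: left_ge0.
have Ri : 0 <= right_part p (p i) by rewrite pi; exact: right_ge0.
have Si := share_le lr Li Ri; rewrite pi in Si.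
case: (ltrgtP y x) => [ylx|xly|yex]; last by rewrite yex eqxx in yx.
- have [h1 h2] := holder2 j2 V.
  have := Ht (lr.2 j2).
  have Ll : 0 <= left_part p (p (lr.2 j2)) by apply: left_ge0; rewrite h2 pj2; lra.
  have := share_ge_r h1 Ll; rewrite h2 pj2 => Hl.
  have : x <= right_part p (1 - x).
    apply: le_bigmin => [|m]; first by lra.
    case: (eqVneq m i) => [->|/Hp [->|->]]; rewrite ?pi; lra.
  have := left_le_id p y; have := @right_le p y j1; rewrite ?pi ?pj1 => /(_ ylx).
  lra.
- have [h1 h2] := holder1 j1 V.
  have := Ht (lr.1 j1).
  have Rl : 0 <= right_part p (p (lr.1 j1)) by apply: right_ge0; rewrite h2 pj1; lra.
  have := share_ge_l h1 Rl; rewrite h2 pj1 => Hl.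
  have : x <= left_part p x.
    apply: le_bigmin => [|m] //.
    case: (eqVneq m i) => [->|/Hp [->|->]]; rewrite ?pi; lra.
  case: (ltrgtP y (1 - x)) => [yl|yg|yeq]; last by rewrite yeq eqxx in yx'.
  + have := @left_le p y j1; have := @right_le p y j2; rewrite ?pi ?pj1 ?pj2.
    move=> /(_ yl) H1 /(_ xly) H2; lra.
  + have := @left_le p y j2; have := right_le_id p y; rewrite ?pi ?pj2.
    move=> H1 /(_ yg) H2; lra.
Qed.


Section Dev.
Variables (x : R) (i : 'I_k).

Definition cfg (s : {ffun 'I_k -> bool}) : 'I_k -> R := fun j => if s j then x else 1 - x.

Definition sw (a b : 'I_k) (j : 'I_k) : 'I_k := if j == a then b else if j == b then a else j.

Lemma swK a b : involutive (sw a b).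
Proof.
move=> j; rewrite /sw.
have [->|hja] := eqVneq j a; have [->|hba] := eqVneq b a;
  rewrite ?eqxx ?(negbTE hba) ?(negbTE hja) //.
have [->|hjb] := eqVneq j b;
  rewrite ?eqxx ?(negbTE hba) ?(negbTE hja) ?(negbTE hjb) //.
Qed.

Lemma sum_sym (l : 'I_k) :
  \sum_s win_prob (cfg s) i = \sum_s win_prob (cfg s) l.
Proof.
pose g (s : {ffun 'I_k -> bool}) := [ffun j => s (sw i l j)].
have gK : involutive g by move=> s; apply/ffunP => j; rewrite !ffunE swK.
rewrite (reindex_inj (inv_inj gK)) /=; apply: eq_bigr => s _.
have -> : cfg (g s) = fun j => cfg s (sw i l j).
  by apply: funext => j; rewrite /cfg ffunE.
have E : sw i l l = i.
  by rewrite /sw; case: (eqVneq l i) => [->|]; rewrite ?eqxx.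
transitivity (win_prob (fun j => cfg s (sw i l j)) (sw i l l)); first by rewrite E.
exact: win_perm (swK i l) (swK i l).
Qed.

Lemma sum_total : (k%:R * \sum_s win_prob (cfg s) i = (2 ^ k)%:R :> R).
Proof.
have <- : \sum_(l < k) \sum_s win_prob (cfg s) l = k%:R * \sum_s win_prob (cfg s) i.
  rewrite (eq_bigr (fun _ : 'I_k => \sum_s win_prob (cfg s) i)); last by move=> l _; rewrite (sum_sym l).
  by rewrite sumr_const card_ord mulr_natl.
rewrite exchange_big /= (eq_bigr (fun _ => 1)); last first.
  by move=> s _; apply: (sum_win i); apply: valid_exists.
by rewrite sumr_const card_ffun card_bool card_ord.
Qed.

Lemma sum_split :
  \sum_s win_prob (cfg s) i =
  \sum_(c : {ffun 'I_k -> bool} | c i == false)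
     (win_prob (profile x i c x) i + win_prob (profile x i c (1 - x)) i).
Proof.
rewrite big_split /= (bigID (fun s : {ffun 'I_k -> bool} => s i)) /=.
congr (_ + _).
  pose fl (c : {ffun 'I_k -> bool}) := [ffun j => if j == i then ~~ c j else c j].
  have flK : involutive fl.
    by move=> c; apply/ffunP => j; rewrite !ffunE; case: eqP => //; rewrite negbK.
  rewrite (reindex_inj (inv_inj flK)) /=.
  apply: eq_big => [c|c]; first by rewrite ffunE eqxx; case: (c i).
  rewrite ffunE eqxx => Hc; congr win_prob; apply: funext => j.
  rewrite /cfg /profile ffunE; case: eqP => [->|_] //.
  by move: Hc; case: (c i).
apply: eq_big => [c|c]; first by case: (c i).
move=> Hc; congr win_prob; apply: funext => j.
rewrite /cfg /profile; case: eqP => [->|_] //.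
by move: Hc; case: (c i).
Qed.

Lemma dev_refl : dev_payoff x i (1 - x) = dev_payoff x i x.
Proof.
rewrite /dev_payoff; congr (_ * _).
pose ng (c : {ffun 'I_k -> bool}) := [ffun j => if j == i then c j else ~~ c j].
have ngK : involutive ng.
  by move=> c; apply/ffunP => j; rewrite !ffunE; case: eqP => //; rewrite negbK.
rewrite (reindex_inj (inv_inj ngK)) /=.
apply: eq_big => [c|c _]; first by rewrite ffunE eqxx.
rewrite -win_refl; congr win_prob; apply: funext => j.
rewrite /profile ffunE; case: eqP => _; first ring.
by case: (c j) => /=; ring.
Qed.


Lemma dev_x : (0 < k)%N -> dev_payoff x i x = k%:R^-1.
Proof.
move=> hk.
have H2 : dev_payoff x i x + dev_payoff x i (1 - x) =
          ((2 ^ k.-1)%:R)^-1 * \sum_s win_prob (cfg s) i.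
  by rewrite /dev_payoff -mulrDr -big_split sum_split.
rewrite dev_refl in H2.
have Kn0 : (k%:R : R) != 0 by rewrite pnatr_eq0 -lt0n.
have Pn0 : ((2 ^ k.-1)%:R : R) != 0 by rewrite pnatr_eq0 expn_eq0.
have ES : \sum_s win_prob (cfg s) i = (2 ^ k)%:R / k%:R.
  by rewrite -sum_total [k%:R * _]mulrC mulfK.
have e2 : ((2 ^ k)%:R : R) = 2 * (2 ^ k.-1)%:R by rewrite -natrM -expnS prednK.
rewrite ES e2 in H2.
have E3 : ((2 ^ k.-1)%:R : R)^-1 * (2 * (2 ^ k.-1)%:R / k%:R) = 2 / k%:R.
  by field; rewrite Kn0 Pn0.
rewrite E3 in H2.
have E4 : (2 : R) / k%:R = k%:R^-1 + k%:R^-1 by rewrite mulr_natl mulr2n.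
rewrite E4 in H2; lra.
Qed.

Lemma dev_y y : 1/4 < x -> x < 1/2 -> 0 <= y -> y <= 1 -> y != x -> y != 1 - x ->
  dev_payoff x i y <= 2 / (2 ^ k.-1)%:R.
Proof.
move=> x1 x2 y0 y1 yx yx'.
rewrite /dev_payoff mulrC; apply: ler_wpM2r; first by rewrite invr_ge0.
pose cT : {ffun 'I_k -> bool} := [ffun j => j != i].
pose cF : {ffun 'I_k -> bool} := [ffun j => false].
apply: (@le_trans _ _ (\sum_(c : {ffun 'I_k -> bool} | c i == false)
            (((c == cT) : nat)%:R + ((c == cF) : nat)%:R))).
  apply: ler_sum => c Hc.
  case: (eqVneq c cT) => [_|hT].
    by apply: (le_trans (win_prob_le1 _ _)); rewrite /= lerDl ler0n.
  case: (eqVneq c cF) => [_|hF].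
    by apply: (le_trans (win_prob_le1 _ _)); rewrite /= add0r.
  rewrite /= addr0 le_eqVlt; apply/orP; left; apply/eqP.
  have ci : c i = false by apply/eqP.
  have [j1 Hj1] : exists j1, c j1.
    apply/existsP; apply: contraR hF => /existsPn H.
    by apply/eqP/ffunP => j; rewrite ffunE; apply/negbTE/H.
  have [j2 /andP [Hj2 j2i]] : exists j2, ~~ c j2 && (j2 != i).
    apply/existsP; apply: contraR hT => /existsPn H.
    apply/eqP/ffunP => j; rewrite ffunE.
    have := H j; case: (eqVneq j i) => [->|_]; first by rewrite ci.
    by rewrite andbT negbK.
  have j1i : j1 != i by apply: contraTneq Hj1 => ->; rewrite ci.
  apply: win_prob0 => lr V.
  apply: (@dev_not_top _ x y i j1 j2 lr) => //.
  - by rewrite /profile eqxx.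
  - by rewrite /profile (negbTE j1i) Hj1.
  - by rewrite /profile (negbTE j2i) (negbTE Hj2).
  - by move=> j ji; rewrite /profile (negbTE ji); case: (c j); [left|right].
have S1 (c0 : {ffun 'I_k -> bool}) : c0 i == false ->
    \sum_(c : {ffun 'I_k -> bool} | c i == false) (((c == c0) : nat)%:R : R) = 1.
  move=> h; rewrite (bigD1 c0) //= eqxx big1 ?addr0 // => c /andP [_ /negbTE ->] //.
rewrite big_split /= !S1 ?ffunE ?eqxx //; lra.
Qed.

End Dev.

Lemma pow_ge (n : nat) : (4 <= n)%N -> (2 * n <= 2 ^ n.-1)%N.
Proof.
elim: n => // n IH; rewrite leq_eqVlt => /orP [/eqP <- // | H].
have Hn : (4 <= n)%N by [].
have := IH Hn => {}IH.
have e : (2 ^ n.+1.-1 = 2 * 2 ^ n.-1)%N by rewrite /= -expnS prednK //; lia.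
rewrite e; lia.
Qed.

Lemma final_num : (4 <= k)%N -> (2 : R) / (2 ^ k.-1)%:R <= k%:R^-1.
Proof.
move=> hk.
have P0 : (0 : R) < (2 ^ k.-1)%:R by rewrite ltr0n expn_gt0.
have K0 : (0 : R) < k%:R by rewrite ltr0n; lia.
rewrite ler_pdivrMr // mulrC ler_pdivlMr //.
have := pow_ge hk; rewrite -(ler_nat R) natrM //.
Qed.

End Comb.

Import HBNNSimple.

Lemma int_bound (R : realType) (mu : probability R R) (f : R -> R) (C M : R) :
  (forall y, 0 <= f y) -> (forall y, f y <= M) ->
  (forall y, 0 <= y -> y <= 1 -> f y <= C) -> mu `[0, 1]%classic = 1%E ->
  (\int[mu]_y (f y)%:E <= C%:E)%E.
Proof.
move=> f0 fM fC hmu.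
rewrite ge0_integralTE; last by move=> y; rewrite lee_fin.
apply: ge_ereal_sup => _ [h hf <-] /=.
rewrite -integralT_nnsfun.
set A := `[(0:R), 1]%classic.
have mA : measurable A by exact: measurable_itv.
have mh := proj2 (measurable_realfun.measurable_EFinP setT h) (measurable_funPT h).
have hge0 y : (0 <= (h y)%:E)%E by rewrite lee_fin.
rewrite -(setUv A) integral_setU //; last 3 first.
- exact: measurableC.
- by rewrite setUv.
- by apply/disj_setPCl.
have H1 : (\int[mu]_(y in A) (h y)%:E <= C%:E)%E.
  rewrite -[X in (_ <= X)%E]mule1 -hmu -integral_cst //.
    apply: ge0_le_integral => //.
    - by apply: measurable_funS mh.
    - move=> y; rewrite /A /= in_itv /= => /andP [y0 y1].
      have := hf y; rewrite !lee_fin => hfy.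
      by apply: (le_trans hfy); apply: fC.
have H2 : (\int[mu]_(y in (~` A)%classic) (h y)%:E <= 0)%E.
  have -> : (0 = M%:E * mu (~` A)%classic)%E.
    by rewrite probability_setC // hmu subee ?mule0.
  rewrite -integral_cst; last exact: measurableC.
    apply: ge0_le_integral => //.
    - exact: measurableC.
    - by apply: measurable_funS mh => //; exact: measurableC.
    - move=> y _; have := hf y; rewrite !lee_fin => hfy.
      by apply: (le_trans hfy).
by rewrite -[C%:E]adde0; apply: leeD.
Qed.


Lemma dev_ge0 (R : realType) (k : nat) (x : R) (i : 'I_k) y : 0 <= dev_payoff x i y.
Proof.
rewrite /dev_payoff mulr_ge0 ?invr_ge0 // sumr_ge0 // => c _.
exact: win_prob_ge0.
Qed.

Lemma dev_leM (R : realType) (k : nat) (x : R) (i : 'I_k) y :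
  dev_payoff x i y <=
  ((2 ^ k.-1)%:R)^-1 * \sum_(c : {ffun 'I_k -> bool} | c i == false) (1:R).
Proof.
rewrite /dev_payoff ler_wpM2l ?invr_ge0 // ler_sum // => c _.
exact: win_prob_le1.
Qed.

Unset Implicit Arguments. Set Strict Implicit. Set Printing Implicit Defensive.

Theorem mainTheorem19 (R : realType) (k : nat) (x : R) (i : 'I_k)
    (hk : (4 <= k)%N) (hx1 : 1 / 4 < x) (hx2 : x < 1 / 2)
    (mu : probability R R) (hmu : mu `[0, 1]%classic = 1%E) :
  (\int[mu]_y (dev_payoff x i y)%:E <=
     ((dev_payoff x i x + dev_payoff x i (1 - x)) / 2)%:E)%E.
Proof.
have hk0 : (0 < k)%N by lia.
have -> : (dev_payoff x i x + dev_payoff x i (1 - x)) / 2 = k%:R^-1.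
  rewrite dev_refl dev_x //; lra.
apply: (int_bound (mu := mu) (dev_ge0 x i) (dev_leM x i)) => // y y0 y1.
case: (eqVneq y x) => [->|yx]; first by rewrite dev_x.
case: (eqVneq y (1 - x)) => [->|yx']; first by rewrite dev_refl dev_x.
apply: le_trans (dev_y i hx1 hx2 y0 y1 yx yx') (final_num R hk).
Qed.
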